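(* Let $G$ be a $(P_7, C_4, \text{gem})$-free graph, let $v_1v_2\cdots v_7v_1$ be a $7$-hole of $G$, $A=\{v_1,\dots,v_7\}$, indices modulo 7. For each $i$ let $X_i=\{x\in N(A): N(x)\cap A=\{v_i,v_{i+3}\}\}$, $Y_i=\{x\in N(A): N(x)\cap A=\{v_i,v_{i+1},v_{i+2}\}\}$, $Z_i=\{x\in N(A): N(x)\cap A=\{v_i,v_{i+3},v_{i+4}\}\}$. Then: (a) $N(A)=\bigcup_{i=1}^7(X_i\cup Y_i\cup Z_i)$; (b) for each $i$, $X_i\cup Z_i$ and $Y_i$ are cliques; (c) $Y_i$ is complete to $Y_{i+1}\cup Y_{i+6}$ and anticomplete to $Y_{i+2}\cup Y_{i+3}\cup Y_{i+4}\cup Y_{i+5}$; (d) either $X_i=\emptyset$ or $X_{i+2}\cup X_{i+5}=\emptyset$; and $X_i$ is anticomplete to $X_{i+1}\cup X_{i+3}\cup X_{i+4}\cup X_{i+6}$; (e) $X_i$ is complete to $Y_{i+2}\cup Y_{i+6}$ and anticomplete to $Y_i\cup Y_{i+1}\cup Y_{i+3}\cup Y_{i+4}\cup Y_{i+5}$; (f) either $Z_i=\emptyset$ or $Z_{i+3}\cup Z_{i+4}=\emptyset$; and $Z_i$ is anticomplete to $Z_{i+1}\cup Z_{i+2}\cup Z_{i+5}\cup Z_{i+6}$; (g) either $Z_i=\emptyset$ or $X_i\cup X_{i+4}\cup X_{i+6}=\emptyset$; and $Z_i$ is anticomplete to $X_{i+1}\cup X_{i+2}\cup X_{i+3}\cup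 X_{i+5}$; (h) $Z_i$ is complete to $Y_{i+2}\cup Y_{i+3}\cup Y_{i+6}$ and anticomplete to $Y_i\cup Y_{i+1}\cup Y_{i+4}\cup Y_{i+5}$.
   Context: All graphs are finite and simple. $G$ is $H$-free if it has no induced subgraph isomorphic to $H$; $P_t$, $C_t$ are the path and cycle on $t$ vertices; a gem is an induced $P_4$ plus a vertex adjacent to all its four vertices. A $k$-hole is an induced cycle of length $k$. For $X\subseteq V(G)$, $N(X)$ is the set of vertices outside $X$ with a neighbour in $X$. A set $S$ is complete (anticomplete) to $T$ if every vertex of $S$ is adjacent (non-adjacent) to every vertex of $T$. *)

(* Defs.v *)
From mathcomp Require Import all_boot all_order.
Set Implicit Arguments. Unset Strict Implicit. Unset Printing Implicit Defensive.

Definition path_rel (t : nat) : rel 'I_t :=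
  fun i j => (val j == (val i).+1) || (val i == (val j).+1).
Definition cycle_rel (t : nat) : rel 'I_t :=
  fun i j => (val j == (val i).+1 %% t) || (val i == (val j).+1 %% t).
Definition gem_rel : rel 'I_5 :=
  fun i j => if (val i == 4) then val j != 4
             else if (val j == 4) then true
             else (val j == (val i).+1) || (val i == (val j).+1).

Definition induced_copy (T : finType) (adj : rel T) (k : nat) (H : rel 'I_k)
  (f : 'I_k -> T) : Prop :=
  injective f /\ forall i j : 'I_k, i != j -> adj (f i) (f j) = H i j.

Definition Hfree (T : finType) (adj : rel T) (k : nat) (H : rel 'I_k) : Prop :=
  ~ exists f : 'I_k -> T, induced_copy adj H f.

(* v is a 7-hole v_0 v_1 ... v_6 v_0 (indices mod 7) *)
Definition hole7 (T : finType) (adj : rel T) (v : 'I_7 -> T) : Prop :=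
  induced_copy adj (@cycle_rel 7) v.

Definition sh (i : 'I_7) (k : nat) : 'I_7 := inord ((val i + k) %% 7).

Section Sets.
Variables (T : finType) (adj : rel T) (v : 'I_7 -> T).

Definition Aset : {set T} := [set v i | i : 'I_7].
Definition NA : {set T} := [set x | (x \notin Aset) && [exists a in Aset, adj x a]].
Definition nbA (x : T) : {set T} := [set a in Aset | adj x a].

Definition Xs (i : 'I_7) : {set T} :=
  [set x in NA | nbA x == [set v i; v (sh i 3)]].
Definition Ys (i : 'I_7) : {set T} :=
  [set x in NA | nbA x == [set v i; v (sh i 1); v (sh i 2)]].
Definition Zs (i : 'I_7) : {set T} :=
  [set x in NA | nbA x == [set v i; v (sh i 3); v (sh i 4)]].

Definition clique (S : {set T}) : Prop :=
  forall x y, x \in S -> y \in S -> x != y -> adj x y.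
Definition complete (S U : {set T}) : Prop :=
  forall x y, x \in S -> y \in U -> adj x y.
Definition anticomplete (S U : {set T}) : Prop :=
  forall x y, x \in S -> y \in U -> ~~ adj x y.
End Sets.

(* Main.v *)
Require Import Defs.
From mathcomp Require Import all_boot all_order.
From mathcomp Require Import zify.
Set Implicit Arguments. Unset Strict Implicit. Unset Printing Implicit Defensive.

Definition cycn (i j : nat) := (j == (i.+1) %% 7) || (i == (j.+1) %% 7).
Definition pathn (i j : nat) := (j == i.+1) || (i == j.+1).
Definition c4n (i j : nat) := (j == i.+1 %% 4) || (i == j.+1 %% 4).
Definition gemn (i j : nat) := if i == 4 then j != 4 else if j == 4 then true
  else (j == i.+1) || (i == j.+1).
Definition Hn (k : nat) : rel nat :=
  if k == 7 then pathn else if k == 4 then c4n else gemn.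

Definition chk (la : rel nat) (c : seq nat) (H : rel nat) :=
  all (fun i => all (fun j => (i == j) || (la (nth 0 c i) (nth 0 c j) == H i j))
    (iota 0 (size c))) (iota 0 (size c)).

Definition validc (la : rel nat) (N : nat) (c : seq nat) : bool :=
  [&& [|| size c == 7, size c == 4 | size c == 5], uniq c,
      all (fun a => a < N) c & chk la c (Hn (size c))].

Lemma cert_k (T : finType) (adj : rel T) (g : nat -> T) (la : rel nat) (N : nat)
  (Hg : forall i j, i < N -> j < N -> g i = g j -> i = j)
  (Hla : forall i j, i < N -> j < N -> i != j -> adj (g i) (g j) = la i j)
  k (H : rel 'I_k) (Hnat : rel nat) (HH : forall i j : 'I_k, H i j = Hnat i j)
  (c : seq nat) : size c = k -> uniq c -> all (fun a => a < N) c ->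
  chk la c Hnat -> exists f, induced_copy adj H f.
Proof.
move=> sc uc ac ck.
have cN : forall i : 'I_k, nth 0 c i < N.
  by move=> i; apply: (allP ac); apply: mem_nth; rewrite sc.
exists (fun i => g (nth 0 c i)); split.
  move=> i j /(Hg _ _ (cN i) (cN j)) /eqP.
  rewrite nth_uniq ?sc // => /eqP; exact: val_inj.
move=> i j ij; rewrite Hla ?cN //; last first.
  by rewrite nth_uniq ?sc.
have := allP ck i; rewrite mem_iota sc /= => /(_ (ltn_ord i)) /allP /(_ j).
rewrite mem_iota /= => /(_ (ltn_ord j)).
have ij' : nat_of_ord i != nat_of_ord j := ij.
by rewrite HH (negbTE ij') /= => /eqP.
Qed.

Lemma cert_contra (T : finType) (adj : rel T) (g : nat -> T) (la : rel nat) (N : nat) :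
  (forall i j, i < N -> j < N -> g i = g j -> i = j) ->
  (forall i j, i < N -> j < N -> i != j -> adj (g i) (g j) = la i j) ->
  Hfree adj (@path_rel 7) -> Hfree adj (@cycle_rel 4) -> Hfree adj gem_rel ->
  forall c, validc la N c -> False.
Proof.
move=> Hg Hla F7 F4 Fg c /and4P [/or3P [] /eqP sc uc ac]; rewrite /Hn sc /= => ck.
- by apply: F7; apply: (cert_k Hg Hla (Hnat := pathn)) ck.
- by apply: F4; apply: (cert_k Hg Hla (Hnat := c4n)) ck.
- by apply: Fg; apply: (cert_k Hg Hla (Hnat := gemn)) ck.
Qed.
Definition certs : seq (seq nat) := [:: [:: 0; 1; 2; 3; 4; 5; 7];
 [:: 0; 1; 2; 3; 7];
 [:: 0; 1; 2; 3; 7; 5; 8];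
 [:: 0; 1; 2; 3; 7; 8; 5];
 [:: 0; 1; 2; 3; 8; 5; 7];
 [:: 0; 1; 2; 3; 8; 7; 5];
 [:: 0; 1; 2; 7];
 [:: 0; 1; 2; 7; 8];
 [:: 0; 1; 2; 8; 7];
 [:: 0; 1; 7; 3; 4; 5; 8];
 [:: 0; 1; 7; 4; 8];
 [:: 0; 1; 7; 5; 4; 3; 8];
 [:: 0; 1; 7; 6];
 [:: 0; 1; 7; 8];
 [:: 0; 1; 8; 3; 4; 5; 7];
 [:: 0; 1; 8; 4; 7];
 [:: 0; 1; 8; 5; 4; 3; 7];
 [:: 0; 1; 8; 7];
 [:: 0; 6; 5; 4; 3; 2; 7];
 [:: 0; 6; 5; 4; 7];
 [:: 0; 6; 5; 4; 7; 2; 8];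
 [:: 0; 6; 5; 4; 7; 8; 2];
 [:: 0; 6; 5; 4; 8; 2; 7];
 [:: 0; 6; 5; 4; 8; 7; 2];
 [:: 0; 6; 5; 7];
 [:: 0; 6; 5; 7; 8];
 [:: 0; 6; 5; 8; 7];
 [:: 0; 6; 7; 2; 3; 4; 8];
 [:: 0; 6; 7; 3; 8];
 [:: 0; 6; 7; 4; 3; 2; 8];
 [:: 0; 6; 7; 8];
 [:: 0; 6; 8; 2; 3; 4; 7];
 [:: 0; 6; 8; 3; 7];
 [:: 0; 6; 8; 4; 3; 2; 7];
 [:: 0; 6; 8; 7];
 [:: 0; 7; 2; 3; 4; 5; 8];
 [:: 0; 7; 2; 8];
 [:: 0; 7; 2; 8; 1];
 [:: 0; 7; 3; 4; 8];
 [:: 0; 7; 3; 8];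
 [:: 0; 7; 4; 3; 8];
 [:: 0; 7; 4; 8];
 [:: 0; 7; 5; 4; 3; 2; 8];
 [:: 0; 7; 5; 8];
 [:: 0; 7; 5; 8; 6];
 [:: 0; 7; 8; 2; 1];
 [:: 0; 7; 8; 2; 3; 4; 5];
 [:: 0; 7; 8; 5; 4; 3; 2];
 [:: 0; 7; 8; 5; 6];
 [:: 0; 8; 2; 3; 4; 5; 7];
 [:: 0; 8; 2; 7; 1];
 [:: 0; 8; 3; 4; 7];
 [:: 0; 8; 4; 3; 7];
 [:: 0; 8; 5; 4; 3; 2; 7];
 [:: 0; 8; 5; 7; 6];
 [:: 0; 8; 7; 2; 1];
 [:: 0; 8; 7; 2; 3; 4; 5];
 [:: 0; 8; 7; 5; 4; 3; 2];
 [:: 0; 8; 7; 5; 6];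
 [:: 1; 0; 6; 5; 4; 3; 7];
 [:: 1; 0; 6; 5; 7];
 [:: 1; 0; 6; 5; 7; 3; 8];
 [:: 1; 0; 6; 5; 7; 8; 3];
 [:: 1; 0; 6; 5; 8; 3; 7];
 [:: 1; 0; 6; 5; 8; 7; 3];
 [:: 1; 0; 6; 7; 8];
 [:: 1; 0; 6; 8; 7];
 [:: 1; 0; 7; 3; 4; 5; 8];
 [:: 1; 0; 7; 4; 8];
 [:: 1; 0; 7; 5; 4; 3; 8];
 [:: 1; 0; 8; 3; 4; 5; 7];
 [:: 1; 0; 8; 4; 7];
 [:: 1; 0; 8; 5; 4; 3; 7];
 [:: 1; 2; 3; 4; 5; 6; 7];
 [:: 1; 2; 3; 4; 7];
 [:: 1; 2; 3; 4; 7; 6; 8];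
 [:: 1; 2; 3; 4; 7; 8; 6];
 [:: 1; 2; 3; 4; 8; 6; 7];
 [:: 1; 2; 3; 4; 8; 7; 6];
 [:: 1; 2; 3; 7];
 [:: 1; 2; 3; 7; 8];
 [:: 1; 2; 3; 8; 7];
 [:: 1; 2; 7; 4; 5; 6; 8];
 [:: 1; 2; 7; 5; 8];
 [:: 1; 2; 7; 6; 5; 4; 8];
 [:: 1; 2; 7; 8];
 [:: 1; 2; 8; 4; 5; 6; 7];
 [:: 1; 2; 8; 5; 7];
 [:: 1; 2; 8; 6; 5; 4; 7];
 [:: 1; 2; 8; 7];
 [:: 1; 7; 3; 4; 5; 6; 8];
 [:: 1; 7; 3; 8];
 [:: 1; 7; 3; 8; 2];
 [:: 1; 7; 4; 5; 8];
 [:: 1; 7; 4; 8];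
 [:: 1; 7; 5; 4; 8];
 [:: 1; 7; 5; 8];
 [:: 1; 7; 6; 5; 4; 3; 8];
 [:: 1; 7; 6; 8];
 [:: 1; 7; 6; 8; 0];
 [:: 1; 7; 8; 3; 4; 5; 6];
 [:: 1; 7; 8; 6; 0];
 [:: 1; 7; 8; 6; 5; 4; 3];
 [:: 1; 8; 3; 4; 5; 6; 7];
 [:: 1; 8; 3; 7; 2];
 [:: 1; 8; 4; 5; 7];
 [:: 1; 8; 5; 4; 7];
 [:: 1; 8; 6; 5; 4; 3; 7];
 [:: 1; 8; 6; 7; 0];
 [:: 1; 8; 7; 3; 4; 5; 6];
 [:: 1; 8; 7; 6; 0];
 [:: 1; 8; 7; 6; 5; 4; 3];
 [:: 2; 1; 0; 6; 5; 4; 7];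
 [:: 2; 1; 0; 6; 7];
 [:: 2; 1; 0; 6; 7; 8; 4];
 [:: 2; 1; 0; 6; 8; 7; 4];
 [:: 2; 1; 0; 7; 8];
 [:: 2; 1; 0; 8; 7];
 [:: 2; 1; 7; 4; 5; 6; 8];
 [:: 2; 1; 7; 5; 8];
 [:: 2; 1; 7; 6; 5; 4; 8];
 [:: 2; 1; 8; 4; 5; 6; 7];
 [:: 2; 1; 8; 5; 7];
 [:: 2; 1; 8; 6; 5; 4; 7];
 [:: 2; 3; 4; 5; 6; 0; 7];
 [:: 2; 3; 4; 5; 7];
 [:: 2; 3; 4; 5; 7; 0; 8];
 [:: 2; 3; 4; 5; 8; 0; 7];
 [:: 2; 3; 4; 7];
 [:: 2; 3; 4; 7; 8];
 [:: 2; 3; 4; 8; 7];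
 [:: 2; 3; 7; 0; 6; 5; 8];
 [:: 2; 3; 7; 5; 6; 0; 8];
 [:: 2; 3; 7; 6; 8];
 [:: 2; 3; 7; 8];
 [:: 2; 3; 8; 0; 6; 5; 7];
 [:: 2; 3; 8; 5; 6; 0; 7];
 [:: 2; 3; 8; 6; 7];
 [:: 2; 3; 8; 7];
 [:: 2; 7; 0; 6; 5; 4; 8];
 [:: 2; 7; 0; 8; 1];
 [:: 2; 7; 4; 5; 6; 0; 8];
 [:: 2; 7; 4; 8];
 [:: 2; 7; 4; 8; 3];
 [:: 2; 7; 5; 6; 8];
 [:: 2; 7; 5; 8];
 [:: 2; 7; 6; 5; 8];
 [:: 2; 7; 6; 8];
 [:: 2; 7; 8; 0; 6; 5; 4];
 [:: 2; 8; 0; 6; 5; 4; 7];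
 [:: 2; 8; 0; 7; 1];
 [:: 2; 8; 4; 5; 6; 0; 7];
 [:: 2; 8; 4; 7; 3];
 [:: 2; 8; 5; 6; 7];
 [:: 2; 8; 6; 5; 7];
 [:: 2; 8; 7; 0; 6; 5; 4];
 [:: 3; 2; 1; 0; 6; 5; 7];
 [:: 3; 2; 1; 0; 7; 8; 5];
 [:: 3; 2; 1; 0; 8; 7; 5];
 [:: 3; 2; 1; 7; 8];
 [:: 3; 2; 1; 8; 7];
 [:: 3; 2; 7; 0; 6; 5; 8];
 [:: 3; 2; 7; 5; 6; 0; 8];
 [:: 3; 2; 7; 6; 8];
 [:: 3; 2; 8; 0; 6; 5; 7];
 [:: 3; 2; 8; 5; 6; 0; 7];
 [:: 3; 2; 8; 6; 7];
 [:: 3; 4; 5; 6; 0; 1; 7];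
 [:: 3; 4; 5; 6; 7];
 [:: 3; 4; 5; 6; 7; 1; 8];
 [:: 3; 4; 5; 6; 8; 1; 7];
 [:: 3; 4; 5; 7];
 [:: 3; 4; 5; 7; 8];
 [:: 3; 4; 5; 8; 7];
 [:: 3; 4; 7; 6; 0; 1; 8];
 [:: 3; 4; 7; 8];
 [:: 3; 4; 8; 6; 0; 1; 7];
 [:: 3; 4; 8; 7];
 [:: 3; 7; 0; 6; 8];
 [:: 3; 7; 1; 8; 2];
 [:: 3; 7; 5; 6; 0; 1; 8];
 [:: 3; 7; 5; 8];
 [:: 3; 7; 5; 8; 4];
 [:: 3; 7; 6; 8];
 [:: 3; 7; 8; 1; 0; 6; 5];
 [:: 3; 8; 0; 6; 7];
 [:: 3; 8; 1; 7; 2];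
 [:: 3; 8; 5; 6; 0; 1; 7];
 [:: 3; 8; 5; 7; 4];
 [:: 3; 8; 7; 1; 0; 6; 5];
 [:: 4; 3; 2; 1; 7; 8; 6];
 [:: 4; 3; 2; 1; 8; 7; 6];
 [:: 4; 3; 2; 7; 8];
 [:: 4; 3; 2; 8; 7];
 [:: 4; 5; 6; 0; 7; 2; 8];
 [:: 4; 5; 6; 0; 8; 2; 7];
 [:: 4; 5; 6; 7];
 [:: 4; 5; 6; 7; 8];
 [:: 4; 5; 6; 8; 7];
 [:: 4; 5; 7; 8];
 [:: 4; 5; 8; 7];
 [:: 4; 7; 2; 8; 3];
 [:: 4; 7; 6; 8];
 [:: 4; 7; 6; 8; 5];
 [:: 4; 7; 8; 2; 1; 0; 6];
 [:: 4; 8; 2; 7; 3];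
 [:: 4; 8; 6; 7; 5];
 [:: 4; 8; 7; 2; 1; 0; 6];
 [:: 5; 4; 3; 7; 8];
 [:: 5; 4; 3; 8; 7];
 [:: 5; 6; 0; 7; 8];
 [:: 5; 6; 0; 8; 7];
 [:: 5; 6; 7; 8];
 [:: 5; 6; 8; 7];
 [:: 5; 7; 0; 8; 6];
 [:: 5; 7; 3; 8; 4];
 [:: 5; 8; 0; 7; 6];
 [:: 5; 8; 3; 7; 4];
 [:: 6; 0; 1; 7; 8];
 [:: 6; 0; 1; 8; 7];
 [:: 6; 5; 4; 7; 8];
 [:: 6; 5; 4; 8; 7];
 [:: 6; 7; 1; 8; 0];
 [:: 6; 7; 4; 8; 5];
 [:: 6; 8; 1; 7; 0];
 [:: 6; 8; 4; 7; 5]].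

Definition tnb (t i k : nat) : bool :=
  match t with
  | 0 => (k == i) || (k == (i + 3) %% 7)
  | 1 => [|| k == i, k == (i + 1) %% 7 | k == (i + 2) %% 7]
  | _ => [|| k == i, k == (i + 3) %% 7 | k == (i + 4) %% 7]
  end.

Definition la2 (sx sy : nat -> bool) (b : bool) : rel nat := fun i j =>
  if (i < 7) && (j < 7) then cycn i j
  else if (i < 7) && (j == 7) then sx i
  else if (i == 7) && (j < 7) then sx j
  else if (i < 7) && (j == 8) then sy i
  else if (i == 8) && (j < 7) then sy j
  else if ((i == 7) && (j == 8)) || ((i == 8) && (j == 7)) then b else false.

Lemma lt9 i : i < 9 -> i < 7 \/ i = 7 \/ i = 8.
Proof. lia. Qed.

Lemma val_sh (i : 'I_7) k : val (sh i k) = (i + k) %% 7.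
Proof. by rewrite /sh /= inordK // ltn_pmod. Qed.

Section Sem.
Variables (T : finType) (adj : rel T).
Hypotheses (sadj : symmetric adj) (iadj : irreflexive adj)
  (F7 : Hfree adj (@path_rel 7)) (F4 : Hfree adj (@cycle_rel 4)) (Fg : Hfree adj gem_rel).
Variables (v : 'I_7 -> T) (hv : hole7 adj v).

Definition Tset (t : nat) (i : 'I_7) : {set T} :=
  match t with 0 => Xs adj v i | 1 => Ys adj v i | _ => Zs adj v i end.

Lemma vinj : injective v. Proof. by case: hv. Qed.

Lemma vadj (i j : 'I_7) : i != j -> adj (v i) (v j) = cycn i j.
Proof. by case: hv => _ H /H ->. Qed.

Lemma vA (k : 'I_7) : v k \in Aset v.
Proof. by apply: imset_f. Qed.

Lemma NA_neq x k : x \in NA adj v -> x != v k.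
Proof.
rewrite inE => /andP [xA _]; apply/eqP => e; move: xA; by rewrite e vA.
Qed.

Lemma mem_type t i x : x \in Tset t i ->
  x \in NA adj v /\ forall k : 'I_7, adj x (v k) = tnb t i k.
Proof.
have E : forall (S : {set T}), nbA adj v x == S -> forall k, adj x (v k) = (v k \in S).
  by move=> S /eqP <- k; rewrite inE vA.
case: t => [|[|t]] /=; rewrite inE => /andP [xN /E {}E]; split => // k;
  by rewrite E !inE !(inj_eq vinj) -!val_eqE /= !val_sh ?orbA.
Qed.

Lemma type_mem t (i : 'I_7) x : t < 3 -> x \in NA adj v ->
  (forall k : 'I_7, adj x (v k) = tnb t i k) -> x \in Tset t i.
Proof.
move=> t3 xN E.
have E2 : forall S : {set T}, S \subset Aset v ->
  (forall k, adj x (v k) = (v k \in S)) -> nbA adj v x == S.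
  move=> S SA ES; apply/eqP/setP => a; rewrite inE.
  case aA: (a \in Aset v) => /=.
    by case/imsetP: aA => k _ ->; rewrite ES.
  by apply/esym/negbTE; apply: contraFN aA; apply: (subsetP SA).
move: E; case: t t3 => [|[|[|//]]] _ E /=; rewrite inE xN /=; apply: E2;
  try (by rewrite !subUset !sub1set !vA);
  move=> k; by rewrite E !inE !(inj_eq vinj) -!val_eqE /= !val_sh ?orbA.
Qed.

Definition gl (x y : T) (i : nat) : T :=
  if i < 7 then v (inord i) else if i == 7 then x else y.

Lemma local_contra (sx sy : nat -> bool) b x y N :
  N <= 9 -> x \in NA adj v -> (N = 9 -> y \in NA adj v /\ x != y) ->
  (forall k : 'I_7, adj x (v k) = sx k) ->
  (forall k : 'I_7, adj y (v k) = sy k) -> adj x y = b ->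
  forall c, validc (la2 sx sy b) N c -> False.
Proof.
move=> N9 xN yN Ex Ey Exy; apply: (cert_contra (adj := adj) (g := gl x y)) => //.
  move=> i j iN jN; have i9 : i < 9 by apply: leq_trans N9.
  have j9 : j < 9 by apply: leq_trans N9.
  have yok : i = 8 \/ j = 8 -> y \in NA adj v /\ x != y.
    by move=> h; apply: yN; lia.
  rewrite /gl; case: (lt9 i9) => [hi|[ei|ei]]; case: (lt9 j9) => [hj|[ej|ej]];
    subst; rewrite ?hi ?hj /=.
  - by move/vinj/(congr1 val) => /=; rewrite !inordK.
  - by move=> e; move: (NA_neq (inord i) xN); rewrite e eqxx.
  - move=> e; have [yN' _] := yok (or_intror erefl).
    by move: (NA_neq (inord i) yN'); rewrite e eqxx.
  - by move=> e; move: (NA_neq (inord j) xN); rewrite e eqxx.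
  - by [].
  - move=> e; have [_ ] := yok (or_intror erefl); by rewrite e eqxx.
  - move=> e; have [yN' _] := yok (or_introl erefl).
    by move: (NA_neq (inord j) yN'); rewrite -e eqxx.
  - move=> e; have [_ ] := yok (or_introl erefl); by rewrite e eqxx.
  - by [].
move=> i j iN jN ij; have i9 : i < 9 by apply: leq_trans N9.
have j9 : j < 9 by apply: leq_trans N9.
rewrite /gl /la2; case: (lt9 i9) => [hi|[ei|ei]]; case: (lt9 j9) => [hj|[ej|ej]];
  subst; rewrite ?hi ?hj /=;
  try (have hi7 : (i == 7) = false by lia);
  try (have hi8 : (i == 8) = false by lia);
  try (have hj7 : (j == 7) = false by lia);
  try (have hj8 : (j == 8) = false by lia);
  rewrite ?hi7 ?hi8 ?hj7 ?hj8 ?andbF ?andFb ?andbT ?orbF /=.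
- rewrite vadj; first by rewrite !inordK.
  by rewrite -val_eqE /= !inordK.
- by rewrite sadj Ex inordK.
- by rewrite sadj Ey inordK.
- by rewrite Ex inordK.
- by [].
- by [].
- by rewrite Ey inordK.
- by rewrite sadj.
- by [].
Qed.


Lemma mem_iota_ord (i : 'I_7) : nat_of_ord i \in iota 0 7.
Proof. by rewrite mem_iota leq0n add0n ltn_ord. Qed.

Definition bad2 t1 i1 t2 i2 b := has (validc (la2 (tnb t1 i1) (tnb t2 i2) b) 9) certs.
Definition samenb t1 i1 t2 i2 := all (fun k => tnb t1 i1 k == tnb t2 i2 k) (iota 0 7).
Definition bad1 (s : nat -> bool) := has (validc (la2 s s false) 8) certs.

Fixpoint allbits (n : nat) : seq (seq bool) :=
  if n is n'.+1 then [seq true :: s | s <- allbits n'] ++ [seq false :: s | s <- allbits n'] else [:: [::]].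

Definition istype (s : seq bool) :=
  has (fun t => has (fun i => all (fun k => nth false s k == tnb t i k) (iota 0 7)) (iota 0 7)) (iota 0 3).

Lemma single_check : all (fun s => ~~ has id s || bad1 (nth false s) || istype s) (allbits 7).
Proof. by vm_compute. Qed.


Lemma allbitsP n s : size s = n -> s \in allbits n.
Proof.
elim: n s => [|n IH] [|b s] //= [] /IH sn.
rewrite /= mem_cat; case: b; first by rewrite (map_f (cons true)).
by rewrite (map_f (cons false)) ?orbT.
Qed.

Lemma pair_bad t1 t2 (i1 i2 : 'I_7) x y : x \in Tset t1 i1 -> y \in Tset t2 i2 ->
  x != y -> bad2 t1 i1 t2 i2 (adj x y) -> False.
Proof.
move=> /mem_type [xN Ex] /mem_type [yN Ey] xy /hasP [c _ Hc].
exact: (local_contra (N := 9) _ xN _ Ex Ey erefl Hc).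
Qed.

Lemma neq_type t1 t2 (i1 i2 : 'I_7) x y : x \in Tset t1 i1 -> y \in Tset t2 i2 ->
  ~~ samenb t1 i1 t2 i2 -> x != y.
Proof.
move=> /mem_type [_ Ex] /mem_type [_ Ey]; apply: contraNneq => e; subst y.
apply/allP => k; rewrite mem_iota => /andP [_ k7].
by rewrite -(Ex (Ordinal k7)) -(Ey (Ordinal k7)).
Qed.

Lemma L_adj t1 t2 d b :
  all (fun i => bad2 t1 i t2 ((i + d) %% 7) (~~ b) && ~~ samenb t1 i t2 ((i + d) %% 7)) (iota 0 7) ->
  forall (i : 'I_7) x y, x \in Tset t1 i -> y \in Tset t2 (sh i d) -> adj x y = b.
Proof.
move=> /allP H i x y Hx Hy.
have /andP [Hb Hs] := H i (mem_iota_ord i).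
rewrite -val_sh in Hb Hs.
apply/eqP; apply/negPn/negP => ne.
apply: (pair_bad Hx Hy (neq_type Hx Hy Hs)).
by clear H; move: ne Hb; case: (adj x y); case: b.
Qed.

Lemma L_adj0 t1 t2 b :
  all (fun i => bad2 t1 i t2 i (~~ b) && ~~ samenb t1 i t2 i) (iota 0 7) ->
  forall (i : 'I_7) x y, x \in Tset t1 i -> y \in Tset t2 i -> adj x y = b.
Proof.
move=> /allP H i x y Hx Hy.
have /andP [Hb Hs] := H i (mem_iota_ord i).
apply/eqP; apply/negPn/negP => ne.
apply: (pair_bad Hx Hy (neq_type Hx Hy Hs)).
by clear H; move: ne Hb; case: (adj x y); case: b.
Qed.

Lemma L_eq t :
  all (fun i => bad2 t i t i false) (iota 0 7) ->
  forall (i : 'I_7) x y, x \in Tset t i -> y \in Tset t i -> x != y -> adj x y.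
Proof.
move=> /allP H i x y Hx Hy xy.
have Hb := H i (mem_iota_ord i).
apply/negPn/negP => ne.
apply: (pair_bad Hx Hy xy).
by move: ne Hb; case: (adj x y).
Qed.

Lemma L_empty t1 t2 d :
  all (fun i => [&& bad2 t1 i t2 ((i + d) %% 7) false, bad2 t1 i t2 ((i + d) %% 7) true &
     ~~ samenb t1 i t2 ((i + d) %% 7)]) (iota 0 7) ->
  forall (i : 'I_7) x y, x \in Tset t1 i -> y \in Tset t2 (sh i d) -> False.
Proof.
move=> /allP H i x y Hx Hy.
have /and3P [H1 H2 Hs] := H i (mem_iota_ord i).
rewrite -val_sh in H1 H2 Hs.
apply: (pair_bad Hx Hy (neq_type Hx Hy Hs)).
by case: (adj x y).
Qed.

Lemma L_empty0 t1 t2 :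
  all (fun i => [&& bad2 t1 i t2 i false, bad2 t1 i t2 i true & ~~ samenb t1 i t2 i]) (iota 0 7) ->
  forall (i : 'I_7) x y, x \in Tset t1 i -> y \in Tset t2 i -> False.
Proof.
move=> /allP H i x y Hx Hy.
have /and3P [H1 H2 Hs] := H i (mem_iota_ord i).
apply: (pair_bad Hx Hy (neq_type Hx Hy Hs)).
by case: (adj x y).
Qed.

Lemma NA_types x : x \in NA adj v -> exists t, exists i : 'I_7, t < 3 /\ x \in Tset t i.
Proof.
move=> xN.
pose s := [seq adj x (v (inord k)) | k <- iota 0 7].
have Es : forall k : 'I_7, adj x (v k) = nth false s k.
  move=> k; rewrite /s (nth_map 0) ?size_iota // nth_iota //.
  by rewrite add0n inord_val.
have := allP single_check s (allbitsP (n := 7) (s := s) ltac:(by rewrite /s size_map size_iota)).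
case/orP => [/orP [] |].
- move/negP; case; move: (xN); rewrite inE => /andP [_ /existsP [a /andP [aA xa]]].
  case/imsetP: aA xa => k _ -> xa; apply/hasP; exists true => //.
  by rewrite -xa Es mem_nth // size_map size_iota.
- move/hasP => [c _ Hc]; exfalso.
  apply: (local_contra (N := 8) (y := x) (sy := nth false s) (b := false) _ xN _ Es Es _ Hc) => //.
- move/hasP => [t]; rewrite mem_iota => /andP [_ t3] /hasP [i]; rewrite mem_iota => /andP [_ i7].
  move=> /allP H; exists t, (Ordinal i7); split => //; apply: type_mem => // k.
  by rewrite Es; apply/eqP; apply: H; rewrite mem_iota /=.
Qed.

End Sem.

Theorem mainTheorem9 (T : finType) (adj : rel T) :
  symmetric adj -> irreflexive adj ->
  Hfree adj (@path_rel 7) -> Hfree adj (@cycle_rel 4) -> Hfree adj gem_rel ->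
  forall v : 'I_7 -> T, hole7 adj v ->
  let X := Xs adj v in let Y := Ys adj v in let Z := Zs adj v in
  (* (a) *)
  NA adj v = \bigcup_(i : 'I_7) (X i :|: Y i :|: Z i) /\
  forall i : 'I_7,
  (* (b) *)
  (clique adj (X i :|: Z i) /\ clique adj (Y i)) /\
  (* (c) *)
  (complete adj (Y i) (Y (sh i 1) :|: Y (sh i 6)) /\
   anticomplete adj (Y i) (Y (sh i 2) :|: Y (sh i 3) :|: Y (sh i 4) :|: Y (sh i 5))) /\
  (* (d) *)
  ((X i = set0 \/ X (sh i 2) :|: X (sh i 5) = set0) /\
   anticomplete adj (X i) (X (sh i 1) :|: X (sh i 3) :|: X (sh i 4) :|: X (sh i 6))) /\
  (* (e) *)
  (complete adj (X i) (Y (sh i 2) :|: Y (sh i 6)) /\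
   anticomplete adj (X i) (Y i :|: Y (sh i 1) :|: Y (sh i 3) :|: Y (sh i 4) :|: Y (sh i 5))) /\
  (* (f) *)
  ((Z i = set0 \/ Z (sh i 3) :|: Z (sh i 4) = set0) /\
   anticomplete adj (Z i) (Z (sh i 1) :|: Z (sh i 2) :|: Z (sh i 5) :|: Z (sh i 6))) /\
  (* (g) *)
  ((Z i = set0 \/ X i :|: X (sh i 4) :|: X (sh i 6) = set0) /\
   anticomplete adj (Z i) (X (sh i 1) :|: X (sh i 2) :|: X (sh i 3) :|: X (sh i 5))) /\
  (* (h) *)
  (complete adj (Z i) (Y (sh i 2) :|: Y (sh i 3) :|: Y (sh i 6)) /\
   anticomplete adj (Z i) (Y i :|: Y (sh i 1) :|: Y (sh i 4) :|: Y (sh i 5))).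
Proof.
move=> sadj iadj F7 F4 Fg v hv X Y Z; rewrite /X /Y /Z {X Y Z}.
split.
  apply/setP => x; apply/idP/idP.
    move/(NA_types sadj iadj F7 F4 Fg hv) => [t [i [t3 Hx]]].
    apply/bigcupP; exists i => //; rewrite !in_setU.
    by move: t3 Hx; case: t => [|[|[|//]]] _ /= ->; rewrite ?orbT.
  move/bigcupP => [i _]; rewrite !in_setU => /orP [/orP [] |] H;
    [case: (mem_type (t:=0) hv H)|case: (mem_type (t:=1) hv H)|case: (mem_type (t:=2) hv H)] => //.
move=> i.
split; [split|].
  move=> x y; rewrite !in_setU => /orP [] Hx /orP [] Hy xy.
  - by apply: (@L_eq _ _ sadj iadj F7 F4 Fg _ hv 0 _ i x y Hx Hy xy); vm_compute.
  - by apply: (@L_adj0 _ _ sadj iadj F7 F4 Fg _ hv 0 2 true _ i x y Hx Hy); vm_compute.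
  - by apply: (@L_adj0 _ _ sadj iadj F7 F4 Fg _ hv 2 0 true _ i x y Hx Hy); vm_compute.
  - by apply: (@L_eq _ _ sadj iadj F7 F4 Fg _ hv 2 _ i x y Hx Hy xy); vm_compute.
  move=> x y Hx Hy xy.
  by apply: (@L_eq _ _ sadj iadj F7 F4 Fg _ hv 1 _ i x y Hx Hy xy); vm_compute.
split; [split|].
{
  move=> x y Hx; rewrite !in_setU => /orP [Hy|Hy].
  - apply: (@L_adj _ _ sadj iadj F7 F4 Fg _ hv 1 1 1 true _ i x y Hx Hy); by vm_compute.
  - apply: (@L_adj _ _ sadj iadj F7 F4 Fg _ hv 1 1 6 true _ i x y Hx Hy); by vm_compute.
}
{
  move=> x y Hx; rewrite !in_setU => /orP [/orP [/orP [Hy|Hy]|Hy]|Hy].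
  - apply/negbT; apply: (@L_adj _ _ sadj iadj F7 F4 Fg _ hv 1 1 2 false _ i x y Hx Hy); by vm_compute.
  - apply/negbT; apply: (@L_adj _ _ sadj iadj F7 F4 Fg _ hv 1 1 3 false _ i x y Hx Hy); by vm_compute.
  - apply/negbT; apply: (@L_adj _ _ sadj iadj F7 F4 Fg _ hv 1 1 4 false _ i x y Hx Hy); by vm_compute.
  - apply/negbT; apply: (@L_adj _ _ sadj iadj F7 F4 Fg _ hv 1 1 5 false _ i x y Hx Hy); by vm_compute.
}
split; [split|].
{
  case: (set_0Vmem (Tset adj v 0 i)) => [E|[x Hx]]; [by left|right].
  apply/eqP; rewrite -subset0; apply/subsetP => y; rewrite !in_setU => /orP [Hy|Hy]; exfalso.
  - apply: (@L_empty _ _ sadj iadj F7 F4 Fg _ hv 0 0 2 _ i x y Hx Hy); by vm_compute.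
  - apply: (@L_empty _ _ sadj iadj F7 F4 Fg _ hv 0 0 5 _ i x y Hx Hy); by vm_compute.
}
{
  move=> x y Hx; rewrite !in_setU => /orP [/orP [/orP [Hy|Hy]|Hy]|Hy].
  - apply/negbT; apply: (@L_adj _ _ sadj iadj F7 F4 Fg _ hv 0 0 1 false _ i x y Hx Hy); by vm_compute.
  - apply/negbT; apply: (@L_adj _ _ sadj iadj F7 F4 Fg _ hv 0 0 3 false _ i x y Hx Hy); by vm_compute.
  - apply/negbT; apply: (@L_adj _ _ sadj iadj F7 F4 Fg _ hv 0 0 4 false _ i x y Hx Hy); by vm_compute.
  - apply/negbT; apply: (@L_adj _ _ sadj iadj F7 F4 Fg _ hv 0 0 6 false _ i x y Hx Hy); by vm_compute.
}
split; [split|].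
{
  move=> x y Hx; rewrite !in_setU => /orP [Hy|Hy].
  - apply: (@L_adj _ _ sadj iadj F7 F4 Fg _ hv 0 1 2 true _ i x y Hx Hy); by vm_compute.
  - apply: (@L_adj _ _ sadj iadj F7 F4 Fg _ hv 0 1 6 true _ i x y Hx Hy); by vm_compute.
}
{
  move=> x y Hx; rewrite !in_setU => /orP [/orP [/orP [/orP [Hy|Hy]|Hy]|Hy]|Hy].
  - apply/negbT; apply: (@L_adj0 _ _ sadj iadj F7 F4 Fg _ hv 0 1 false _ i x y Hx Hy); by vm_compute.
  - apply/negbT; apply: (@L_adj _ _ sadj iadj F7 F4 Fg _ hv 0 1 1 false _ i x y Hx Hy); by vm_compute.
  - apply/negbT; apply: (@L_adj _ _ sadj iadj F7 F4 Fg _ hv 0 1 3 false _ i x y Hx Hy); by vm_compute.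
  - apply/negbT; apply: (@L_adj _ _ sadj iadj F7 F4 Fg _ hv 0 1 4 false _ i x y Hx Hy); by vm_compute.
  - apply/negbT; apply: (@L_adj _ _ sadj iadj F7 F4 Fg _ hv 0 1 5 false _ i x y Hx Hy); by vm_compute.
}
split; [split|].
{
  case: (set_0Vmem (Tset adj v 2 i)) => [E|[x Hx]]; [by left|right].
  apply/eqP; rewrite -subset0; apply/subsetP => y; rewrite !in_setU => /orP [Hy|Hy]; exfalso.
  - apply: (@L_empty _ _ sadj iadj F7 F4 Fg _ hv 2 2 3 _ i x y Hx Hy); by vm_compute.
  - apply: (@L_empty _ _ sadj iadj F7 F4 Fg _ hv 2 2 4 _ i x y Hx Hy); by vm_compute.
}
{
  move=> x y Hx; rewrite !in_setU => /orP [/orP [/orP [Hy|Hy]|Hy]|Hy].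
  - apply/negbT; apply: (@L_adj _ _ sadj iadj F7 F4 Fg _ hv 2 2 1 false _ i x y Hx Hy); by vm_compute.
  - apply/negbT; apply: (@L_adj _ _ sadj iadj F7 F4 Fg _ hv 2 2 2 false _ i x y Hx Hy); by vm_compute.
  - apply/negbT; apply: (@L_adj _ _ sadj iadj F7 F4 Fg _ hv 2 2 5 false _ i x y Hx Hy); by vm_compute.
  - apply/negbT; apply: (@L_adj _ _ sadj iadj F7 F4 Fg _ hv 2 2 6 false _ i x y Hx Hy); by vm_compute.
}
split; [split|].
{
  case: (set_0Vmem (Tset adj v 2 i)) => [E|[x Hx]]; [by left|right].
  apply/eqP; rewrite -subset0; apply/subsetP => y; rewrite !in_setU => /orP [/orP [Hy|Hy]|Hy]; exfalso.
  - apply: (@L_empty0 _ _ sadj iadj F7 F4 Fg _ hv 2 0 _ i x y Hx Hy); by vm_compute.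
  - apply: (@L_empty _ _ sadj iadj F7 F4 Fg _ hv 2 0 4 _ i x y Hx Hy); by vm_compute.
  - apply: (@L_empty _ _ sadj iadj F7 F4 Fg _ hv 2 0 6 _ i x y Hx Hy); by vm_compute.
}
{
  move=> x y Hx; rewrite !in_setU => /orP [/orP [/orP [Hy|Hy]|Hy]|Hy].
  - apply/negbT; apply: (@L_adj _ _ sadj iadj F7 F4 Fg _ hv 2 0 1 false _ i x y Hx Hy); by vm_compute.
  - apply/negbT; apply: (@L_adj _ _ sadj iadj F7 F4 Fg _ hv 2 0 2 false _ i x y Hx Hy); by vm_compute.
  - apply/negbT; apply: (@L_adj _ _ sadj iadj F7 F4 Fg _ hv 2 0 3 false _ i x y Hx Hy); by vm_compute.
  - apply/negbT; apply: (@L_adj _ _ sadj iadj F7 F4 Fg _ hv 2 0 5 false _ i x y Hx Hy); by vm_compute.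
}
split.
{
  move=> x y Hx; rewrite !in_setU => /orP [/orP [Hy|Hy]|Hy].
  - apply: (@L_adj _ _ sadj iadj F7 F4 Fg _ hv 2 1 2 true _ i x y Hx Hy); by vm_compute.
  - apply: (@L_adj _ _ sadj iadj F7 F4 Fg _ hv 2 1 3 true _ i x y Hx Hy); by vm_compute.
  - apply: (@L_adj _ _ sadj iadj F7 F4 Fg _ hv 2 1 6 true _ i x y Hx Hy); by vm_compute.
}
{
  move=> x y Hx; rewrite !in_setU => /orP [/orP [/orP [Hy|Hy]|Hy]|Hy].
  - apply/negbT; apply: (@L_adj0 _ _ sadj iadj F7 F4 Fg _ hv 2 1 false _ i x y Hx Hy); by vm_compute.
  - apply/negbT; apply: (@L_adj _ _ sadj iadj F7 F4 Fg _ hv 2 1 1 false _ i x y Hx Hy); by vm_compute.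
  - apply/negbT; apply: (@L_adj _ _ sadj iadj F7 F4 Fg _ hv 2 1 4 false _ i x y Hx Hy); by vm_compute.
  - apply/negbT; apply: (@L_adj _ _ sadj iadj F7 F4 Fg _ hv 2 1 5 false _ i x y Hx Hy); by vm_compute.
}
Qed.
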